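(* In the multi-parameter setting described in the context, $H(\theta)\le C_\Upsilon(\theta)$ as $m\times m$ real symmetric matrices, i.e. $v^TH(\theta)v\le v^TC_\Upsilon(\theta)v$ for all $v\in\mathbb{R}^m$.
   Context: A multi-parameter quantum channel on density matrices on $\mathbb{C}^d$ is $\rho_0\mapsto\sum_kE_k(\theta)\rho_0E_k(\theta)^\dagger$ with $\theta=(\theta^1,\dots,\theta^m)\in\mathbb{R}^m$, Kraus operators differentiable in $\theta$, $\sum_kE_k^\dagger E_k=I$. The input is a fixed pure state $\rho_0=|\psi_0\rangle\langle\psi_0|$. Canonical Kraus operators $\{\Upsilon_k(\theta)\}_{k=1}^d$: a differentiable Kraus representation of the same channel with $\mathrm{tr}\{\Upsilon_k\rho_0\Upsilon_j^\dagger\}=\delta_{jk}p_k(\theta)$; the output is $\rho_{out}(\theta)=\sum_kp_k(\theta)|w_k(\theta)\rangle\langle w_k(\theta)|$ with $\{|w_k(\theta)\rangle\}$ an orthonormal basis differentiable in $\theta$ and $|w_k\rangle=p_k^{-1/2}\Upsilon_k|\psi_0\rangle$ when $p_k>0$. Write $X^{(j)}=\partial X/\partial\theta^j$. The multi-parameter SM bound is the matrix $C_\Upsilon(\theta)_{jk}=4\sum_l\mathrm{Re}\,\mathrm{tr}\{\Upsilon_l^{(j)}\rho_0\Upsilon_l^{(k)\dagger}\}$. The SLD quantum information matrix is $H(\theta)_{jk}=\mathrm{Re}\,\mathrm{tr}\{\lambda^{(j)}\rho_{out}\lambda^{(k)}\}$, where $\lambda^{(j)}$ is a self-adjoint solution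 of $\partial\rho_{out}/\partial\theta^j=\frac12(\rho_{out}\lambda^{(j)}+\lambda^{(j)}\rho_{out})$. *)

(* Defs.v *)
From HB Require Import structures.
From mathcomp Require Import all_boot all_order all_algebra.
From mathcomp Require Import all_classical all_reals.
From mathcomp Require Import topology normedtype derive.
From mathcomp Require Import complex.
Set Implicit Arguments. Unset Strict Implicit. Unset Printing Implicit Defensive.
Import Order.TTheory GRing.Theory Num.Theory.
Import numFieldNormedType.Exports.
Local Open Scope ring_scope.

Notation CM R d := 'M[(R[i])%type]_d.
Notation CV R d := 'cV[(R[i])%type]_d.

Definition adj (R : realType) (p q : nat) (A : 'M[R[i]]_(p, q)) : 'M[R[i]]_(q, p) :=
  map_mx (@conjc R) A^T.

Definition selfadj (R : realType) (d : nat) (A : CM R d) : Prop := adj A = A.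

Definition reF (R : realType) (m p q : nat) (F : 'rV[R]_m -> 'M[R[i]]_(p, q))
  (a : 'I_p) (b : 'I_q) : 'rV[R]_m -> R := fun t => complex.Re (F t a b).
Definition imF (R : realType) (m p q : nat) (F : 'rV[R]_m -> 'M[R[i]]_(p, q))
  (a : 'I_p) (b : 'I_q) : 'rV[R]_m -> R := fun t => complex.Im (F t a b).

(* F : R^m -> C^{p x q} is (Frechet) differentiable everywhere
   (as a map R^m -> R^{2pq}, i.e. entrywise in real and imaginary parts) *)
Definition mx_differentiable (R : realType) (m p q : nat)
  (F : 'rV[R]_m -> 'M[R[i]]_(p, q)) : Prop :=
  forall t a b, differentiable (reF F a b) t /\ differentiable (imF F a b) t.

Definition evec (R : realType) (m : nat) (j : 'I_m) : 'rV[R]_m := delta_mx 0 j.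

Definition pderiv (R : realType) (m p q : nat) (F : 'rV[R]_m -> 'M[R[i]]_(p, q))
  (j : 'I_m) (t : 'rV[R]_m) : 'M[R[i]]_(p, q) :=
  \matrix_(a, b) Complex ('D_(evec R j) (reF F a b) t) ('D_(evec R j) (imF F a b) t).

Definition pure_st (R : realType) (d : nat) (psi : CV R d) : CM R d := psi *m adj psi.

Definition chan_out (R : realType) (m d r : nat) (Y : 'I_r -> 'rV[R]_m -> CM R d)
  (rho0 : CM R d) (t : 'rV[R]_m) : CM R d :=
  \sum_(k < r) (Y k t *m rho0 *m adj (Y k t)).

Definition SMbound (R : realType) (m d : nat) (Y : 'I_d -> 'rV[R]_m -> CM R d)
  (rho0 : CM R d) (t : 'rV[R]_m) (j k : 'I_m) : R :=
  4 * \sum_(l < d) complex.Re (\tr (pderiv (Y l) j t *m rho0 *m adj (pderiv (Y l) k t))).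

Definition SLDinfo (R : realType) (m d : nat) (lam : 'I_m -> CM R d) (rho : CM R d)
  (j k : 'I_m) : R :=
  complex.Re (\tr (lam j *m rho *m lam k)).

Definition qform (R : realType) (m : nat) (M : 'I_m -> 'I_m -> R) (v : 'rV[R]_m) : R :=
  \sum_(j < m) \sum_(k < m) v 0 j * M j k * v 0 k.

(* Main.v *)
Require Import Defs.
From HB Require Import structures.
From mathcomp Require Import all_boot all_order all_algebra.
From mathcomp Require Import all_classical all_reals.
From mathcomp Require Import topology normedtype derive.
From mathcomp Require Import complex.
From mathcomp Require Import ring.
Import Order.TTheory GRing.Theory Num.Theory.
Import numFieldNormedType.Exports.
Local Open Scope ring_scope.
Local Open Scope complex_scope.

Section C.
Variable R : realType.
Implicit Types a b : R[i].
Lemma qReD a b : complex.Re (a + b) = complex.Re a + complex.Re b.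
Proof. by case: a; case: b. Qed.
Lemma qImD a b : complex.Im (a + b) = complex.Im a + complex.Im b.
Proof. by case: a; case: b. Qed.
Lemma qReM a b : complex.Re (a * b) = complex.Re a * complex.Re b - complex.Im a * complex.Im b.
Proof. by case: a; case: b. Qed.
Lemma qImM a b : complex.Im (a * b) = complex.Re a * complex.Im b + complex.Im a * complex.Re b.
Proof. by case: a; case: b. Qed.
Lemma qReJ a : complex.Re (a^*) = complex.Re a.
Proof. by case: a. Qed.
Lemma qImJ a : complex.Im (a^*) = - complex.Im a.
Proof. by case: a. Qed.
Lemma qRe0 : complex.Re (0 : R[i]) = 0. Proof. by []. Qed.
Lemma qIm0 : complex.Im (0 : R[i]) = 0. Proof. by []. Qed.
Lemma qRe_sum n (F : 'I_n -> R[i]) : complex.Re (\sum_(k < n) F k) = \sum_(k < n) complex.Re (F k).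
Proof. exact: (big_morph _ (@qReD) qRe0). Qed.
Lemma qReMr (x : R) a : complex.Re (x%:C * a) = x * complex.Re a.
Proof. by case: a => u v /=; rewrite mul0r subr0. Qed.
Lemma qReN a : complex.Re (- a) = - complex.Re a. Proof. by case: a. Qed.
End C.

Section D.
Variables (R : realType) (m : nat) (t e : 'rV[R]_m).
Definition cder (F : 'rV[R]_m -> R[i]) :=
  derivable (fun s => complex.Re (F s)) t e /\ derivable (fun s => complex.Im (F s)) t e.
Definition cD (F : 'rV[R]_m -> R[i]) : R[i] :=
  Complex ('D_e (fun s => complex.Re (F s)) t) ('D_e (fun s => complex.Im (F s)) t).

End D.

Set Implicit Arguments. Unset Strict Implicit.
Section T.
Variables (R : realType) (m : nat) (t e : 'rV[R]_m).
Implicit Types f g : 'rV[R]_m -> R.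
Lemma dD f g : derivable f t e -> derivable g t e ->
  derivable (fun s => f s + g s) t e /\ 'D_e (fun s => f s + g s) t = 'D_e f t + 'D_e g t.
Proof. move=> *; split; [exact: derivableD| exact: deriveD]. Qed.
Lemma dN f : derivable f t e ->
  derivable (fun s => - f s) t e /\ 'D_e (fun s => - f s) t = - 'D_e f t.
Proof. move=> *; split; [exact: derivableN| exact: deriveN]. Qed.
Lemma dM f g : derivable f t e -> derivable g t e ->
  derivable (fun s => f s * g s) t e /\ 'D_e (fun s => f s * g s) t = f t * 'D_e g t + g t * 'D_e f t.
Proof. move=> H1 H2; split; [exact: (@derivableM R _ f g t e H1 H2)| exact: (@deriveM R _ f g t e H1 H2)]. Qed.
Lemma dC (c : R) : derivable (fun _ => c) t e /\ 'D_e (fun _ => c) t = 0.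
Proof. split; [exact: derivable_cst| exact: derive_cst]. Qed.
End T.
Section D2.
Variables (R : realType) (m : nat) (t e : 'rV[R]_m).
Local Notation cder := (@cder R m t e).
Local Notation cD := (@cD R m t e).
Local Notation fr F := (fun s => complex.Re (F s)).
Local Notation fi F := (fun s => complex.Im (F s)).

Lemma cderD F G : cder F -> cder G -> cder (fun s => F s + G s) /\ cD (fun s => F s + G s) = cD F + cD G.
Proof.
move=> [F1 F2] [G1 G2]; rewrite /cder /cD.
have -> : fr (fun s => F s + G s) = (fun s => fr F s + fr G s).
  by apply/funext => s /=; rewrite qReD.
have -> : fi (fun s => F s + G s) = (fun s => fi F s + fi G s).
  by apply/funext => s /=; rewrite qImD.
have [D1 E1] := dD F1 G1; have [D2 E2] := dD F2 G2.
by rewrite E1 E2.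
Qed.

Lemma cderM F G : cder F -> cder G -> cder (fun s => F s * G s) /\ cD (fun s => F s * G s) = cD F * G t + F t * cD G.
Proof.
move=> [F1 F2] [G1 G2]; rewrite /cder /cD.
have -> : fr (fun s => F s * G s) = (fun s => fr F s * fr G s + - (fi F s * fi G s)).
  by apply/funext => s /=; case: (F s); case: (G s).
have -> : fi (fun s => F s * G s) = (fun s => fr F s * fi G s + fi F s * fr G s).
  by apply/funext => s /=; case: (F s); case: (G s).
have [M1 N1] := dM F1 G1; have [M2 N2] := dM F2 G2.
have [M3 N3] := dM F1 G2; have [M4 N4] := dM F2 G1.
have [M5 N5] := dN M2.
have [D1 E1] := dD M1 M5; have [D2 E2] := dD M3 M4.
split => //; rewrite E1 E2 N1 N5 N2 N3 N4 /=.
move: ('D_e _ t) ('D_e _ t) ('D_e _ t) ('D_e _ t) => x1 x2 x3 x4.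
case: (F t) => a b; case: (G t) => c d /=.
apply/eqP; rewrite eq_complex /=; apply/andP; split; apply/eqP; ring.
Qed.

Lemma cderJ F : cder F -> cder (fun s => (F s)^*) /\ cD (fun s => (F s)^*) = (cD F)^*.
Proof.
move=> [F1 F2]; rewrite /cder /cD.
have -> : fr (fun s => (F s)^*) = fr F.
  by apply/funext => s /=; rewrite qReJ.
have -> : fi (fun s => (F s)^*) = (fun s => - fi F s).
  by apply/funext => s /=; rewrite qImJ.
have [D1 E1] := dN F2.
by rewrite E1.
Qed.

Lemma cder_cst (c : R[i]) : cder (fun _ => c) /\ cD (fun _ => c) = 0.
Proof.
rewrite /cder /cD; have [D1 E1] := @dC R m t e (complex.Re c); have [D2 E2] := @dC R m t e (complex.Im c).
by rewrite E1 E2.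
Qed.

Lemma cder_sum n (F : 'I_n -> 'rV[R]_m -> R[i]) : (forall k, cder (F k)) ->
  cder (fun s => \sum_(k < n) F k s) /\ cD (fun s => \sum_(k < n) F k s) = \sum_(k < n) cD (F k).
Proof.
elim: n F => [|n IH] F H.
  have -> : (fun s => \sum_(k < 0) F k s) = (fun _ => 0) by apply/funext => s; rewrite big_ord0.
  by rewrite big_ord0; apply: cder_cst.
have -> : (fun s => \sum_(k < n.+1) F k s) = (fun s => \sum_(k < n) F (widen_ord (leqnSn n) k) s + F ord_max s).
  by apply/funext => s; rewrite [LHS]big_ord_recr.
have [H1 H2] := IH (fun k => F (widen_ord (leqnSn n) k)) (fun k => H _).
have [H3 H4] := cderD H1 (H ord_max).
by split => //; rewrite H4 H2 [RHS]big_ord_recr.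
Qed.
End D2.

Section M.
Variables (R : realType) (m : nat) (t e : 'rV[R]_m).
Local Notation cder := (@cder R m t e).
Local Notation cD := (@cD R m t e).
Definition mder p q (F : 'rV[R]_m -> 'M[R[i]]_(p, q)) := forall a b, cder (fun s => F s a b).
Definition pD p q (F : 'rV[R]_m -> 'M[R[i]]_(p, q)) := \matrix_(a, b) cD (fun s => F s a b).

Lemma mderM p q r (F : 'rV[R]_m -> 'M[R[i]]_(p, q)) (G : 'rV[R]_m -> 'M[R[i]]_(q, r)) :
  mder F -> mder G -> mder (fun s => F s *m G s) /\ pD (fun s => F s *m G s) = pD F *m G t + F t *m pD G.
Proof.
move=> HF HG.
have E a b : (fun s => (F s *m G s) a b) = (fun s => \sum_(c < q) (fun c s => F s a c * G s c b) c s).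
  by apply/funext => s; rewrite mxE.
have K a b c : cder (fun s => F s a c * G s c b) /\ cD (fun s => F s a c * G s c b) = cD (fun s => F s a c) * G t c b + F t a c * cD (fun s => G s c b).
  exact: cderM.
split.
  by move=> a b; rewrite E; exact: (@cder_sum R m t e q (fun c s => F s a c * G s c b) (fun c => (K a b c).1)).1.
apply/matrixP => a b; rewrite mxE E (@cder_sum R m t e q (fun c s => F s a c * G s c b) (fun c => (K a b c).1)).2 !mxE.
rewrite -big_split /=; apply: eq_bigr => c _; by rewrite (K a b c).2 !mxE.
Qed.

Lemma mder_adj p q (F : 'rV[R]_m -> 'M[R[i]]_(p, q)) :
  mder F -> mder (fun s => adj (F s)) /\ pD (fun s => adj (F s)) = adj (pD F).
Proof.
move=> HF.
have E a b : (fun s => (adj (F s)) a b) = (fun s => (F s b a)^*%C).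
  by apply/funext => s; rewrite !mxE.
split; first by move=> a b; rewrite E; exact: (cderJ (HF b a)).1.
by apply/matrixP => a b; rewrite mxE E (cderJ (HF b a)).2 !mxE.
Qed.

Lemma mder_cst p q (M : 'M[R[i]]_(p, q)) : mder (fun _ => M) /\ pD (fun _ => M) = 0.
Proof.
split; first by move=> a b; exact: (cder_cst t e (M a b)).1.
by apply/matrixP => a b; rewrite !mxE (cder_cst t e (M a b)).2.
Qed.

Lemma mder_sum p q n (F : 'I_n -> 'rV[R]_m -> 'M[R[i]]_(p, q)) : (forall k, mder (F k)) ->
  mder (fun s => \sum_(k < n) F k s) /\ pD (fun s => \sum_(k < n) F k s) = \sum_(k < n) pD (F k).
Proof.
move=> HF.
have E a b : (fun s => (\sum_(k < n) F k s) a b) = (fun s => \sum_(k < n) (fun k s => F k s a b) k s).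
  by apply/funext => s; rewrite summxE.
split; first by move=> a b; rewrite E; exact: (@cder_sum R m t e n (fun k s => F k s a b) (fun k => HF k a b)).1.
apply/matrixP => a b; rewrite !mxE E (@cder_sum R m t e n (fun k s => F k s a b) (fun k => HF k a b)).2 summxE.
by apply: eq_bigr => k _; rewrite mxE.
Qed.

Lemma mder_diff p q (F : 'rV[R]_m -> 'M[R[i]]_(p, q)) : mx_differentiable F -> mder F.
Proof.
move=> H a b; have [H1 H2] := H t a b.
by split; apply: diff_derivable.
Qed.
End M.

Section Alg.
Variable R : realType.
Local Notation C := (R[i]).

Lemma hadjM p q r (A : 'M[C]_(p, q)) (B : 'M[C]_(q, r)) : adj (A *m B) = adj B *m adj A.
Proof. by rewrite /adj trmx_mul map_mxM. Qed.
Lemma hadjD p q (A B : 'M[C]_(p, q)) : adj (A + B) = adj A + adj B.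
Proof. by rewrite /adj linearD map_mxD. Qed.
Lemma hadjN p q (A : 'M[C]_(p, q)) : adj (- A) = - adj A.
Proof. by rewrite /adj linearN map_mxN. Qed.
Lemma hadjB p q (A B : 'M[C]_(p, q)) : adj (A - B) = adj A - adj B.
Proof. by rewrite hadjD hadjN. Qed.
Lemma hadjZ p q (c : C) (A : 'M[C]_(p, q)) : adj (c *: A) = (c^*)%C *: adj A.
Proof. by apply/matrixP => a b; rewrite !mxE rmorphM. Qed.
Lemma hadjK p q (A : 'M[C]_(p, q)) : adj (adj A) = A.
Proof. by apply/matrixP => a b; rewrite !mxE conjcK. Qed.
Lemma hadj_sum p q n (F : 'I_n -> 'M[C]_(p, q)) : adj (\sum_(k < n) F k) = \sum_(k < n) adj (F k).
Proof. by rewrite /adj raddf_sum /= (big_morph _ (@map_mxD _ _ _ _ _) (map_mx0 _ _ _)). Qed.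
Lemma conjR (x : R) : ((x%:C)^*)%C = x%:C.
Proof. exact: conjc_real. Qed.

Lemma Re_tr_ge0 p q (A : 'M[C]_(p, q)) : 0 <= complex.Re (\tr (A *m adj A)).
Proof.
rewrite /mxtrace qRe_sum; apply: sumr_ge0 => a _; rewrite mxE qRe_sum.
apply: sumr_ge0 => b _; rewrite !mxE.
case: (A a b) => x y /=; rewrite mulrN opprK; apply: addr_ge0; exact: sqr_ge0.
Qed.

Lemma mxtraceB' d (A B : 'M[C]_d) : \tr (A - B) = \tr A - \tr B.
Proof. exact: raddfB. Qed.

Lemma key_gen_dummy : True. Proof. by []. Qed.
End Alg.

Lemma key_gen (K : comPzRingType) d (L Y Z P Yd Zd : 'M[K]_d) :
  \tr ((L *m Y - 2 *: Z) *m P *m (Yd *m L - 2 *: Zd)) =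
   \tr (L *m Y *m P *m Yd *m L)
   - 2 * (\tr (L *m Z *m P *m Yd) + \tr (L *m Y *m P *m Zd))
   + 4 * \tr (Z *m P *m Zd).
Proof.
  rewrite !mulmxBl !mulmxBr.
  rewrite -!scalemxAr -!scalemxAl !scalerA !mulmxA.
  rewrite !raddfB /= !mxtraceZ.
  rewrite (mxtrace_mulC (Z *m P *m Yd) L) !mulmxA.
  move: (\tr (L *m Y *m P *m Yd *m L)) (\tr (L *m Y *m P *m Zd)) (\tr (L *m Z *m P *m Yd)) (\tr (Z *m P *m Zd)) => a b c e.
  ring.
Qed.
Lemma core_gen (K : comPzRingType) d n (L rho P : 'M[K]_d) (Y Z Yd Zd : 'I_n -> 'M[K]_d) (h : K) :
  rho = \sum_(l < n) (Y l *m P *m Yd l) ->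
  \sum_(l < n) (Z l *m P *m Yd l + Y l *m P *m Zd l) = h *: (rho *m L + L *m rho) ->
  h * 2 = 1 ->
  \sum_(l < n) \tr ((L *m Y l - 2 *: Z l) *m P *m (Yd l *m L - 2 *: Zd l))
   = 4 * \sum_(l < n) \tr (Z l *m P *m Zd l) - \tr (L *m rho *m L).
Proof.
move=> hrho hD h2.
rewrite (eq_bigr _ (fun l _ => @key_gen _ _ L (Y l) (Z l) P (Yd l) (Zd l))).
rewrite big_split /= sumrB -!mulr_sumr.
have ha : \sum_(l < n) \tr (L *m Y l *m P *m Yd l *m L) = \tr (L *m rho *m L).
  rewrite hrho mulmx_sumr mulmx_suml raddf_sum; apply: eq_bigr => l _; by rewrite !mulmxA.
have hb : \sum_(l < n) (\tr (L *m Z l *m P *m Yd l) + \tr (L *m Y l *m P *m Zd l)) = \tr (L *m rho *m L).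
  have -> : \sum_(l < n) (\tr (L *m Z l *m P *m Yd l) + \tr (L *m Y l *m P *m Zd l))
      = \tr (L *m \sum_(l < n) (Z l *m P *m Yd l + Y l *m P *m Zd l)).
    rewrite mulmx_sumr raddf_sum; apply: eq_bigr => l _; by rewrite mulmxDr raddfD /= !mulmxA.
  rewrite hD -scalemxAr mxtraceZ mulmxDr raddfD /= (mxtrace_mulC L (L *m rho)) !mulmxA.
  by rewrite -mulr2n -mulr_natr mulrA mulrAC h2 mul1r.
rewrite ha hb.
move: (\tr (L *m rho *m L)) (\sum_(i < n) \tr (Z i *m P *m Zd i)) => x y.
ring.
Qed.
Section T2.
Variable R : realType.
Local Notation C := (R[i]).
Lemma Re_natM n (z : C) : complex.Re (n%:R * z) = n%:R * complex.Re z.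
Proof. rewrite -(rmorph_nat (real_complex R)). exact: qReMr. Qed.

Lemma core d n (L : 'M[C]_d) (Y Z : 'I_n -> 'M[C]_d) (psi : 'cV[C]_d) (rho : 'M[C]_d) :
  adj L = L ->
  rho = \sum_(l < n) (Y l *m (psi *m adj psi) *m adj (Y l)) ->
  \sum_(l < n) (Z l *m (psi *m adj psi) *m adj (Y l) + Y l *m (psi *m adj psi) *m adj (Z l))
     = ((2:R)^-1)%:C *: (rho *m L + L *m rho) ->
  complex.Re (\tr (L *m rho *m L)) <= 4 * \sum_(l < n) complex.Re (\tr (Z l *m (psi *m adj psi) *m adj (Z l))).
Proof.
move=> hL hrho hD.
have h2 : ((2:R)^-1)%:C * 2 = 1 :> C.
  by rewrite -(rmorph_nat (real_complex R)) -rmorphM mulVf // pnatr_eq0.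
have E := @core_gen _ d n L rho (psi *m adj psi) Y Z (fun l => adj (Y l)) (fun l => adj (Z l)) _ hrho hD h2.
have hnn : 0 <= complex.Re (\sum_(l < n) \tr ((L *m Y l - 2 *: Z l) *m (psi *m adj psi) *m (adj (Y l) *m L - 2 *: adj (Z l)))).
  rewrite qRe_sum; apply: sumr_ge0 => l _.
  have -> : adj (Y l) *m L - 2 *: adj (Z l) = adj (L *m Y l - 2 *: Z l).
    by rewrite hadjB hadjZ hadjM hL conjc_nat.
  move: (L *m Y l - 2 *: Z l) => X.
  have -> : X *m (psi *m adj psi) *m adj X = (X *m psi) *m adj (X *m psi) by rewrite hadjM !mulmxA.
  exact: Re_tr_ge0.
rewrite E qReD qReN Re_natM qRe_sum in hnn.
by rewrite -subr_ge0.
Qed.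
End T2.


Set Implicit Arguments. Unset Strict Implicit.


Lemma trexp (K : comPzRingType) d m (A Bd : 'I_m -> 'M[K]_d) (M : 'M[K]_d) (c : 'I_m -> K) :
  \tr ((\sum_(j < m) c j *: A j) *m M *m (\sum_(k < m) c k *: Bd k))
  = \sum_(j < m) \sum_(k < m) c j * \tr (A j *m M *m Bd k) * c k.
Proof.
rewrite mulmx_suml mulmx_suml raddf_sum /=; apply: eq_bigr => j _.
rewrite mulmx_sumr raddf_sum /=; apply: eq_bigr => k _.
rewrite -scalemxAl -scalemxAl -scalemxAr !mxtraceZ.
by rewrite [c k * _]mulrC mulrA.
Qed.

Lemma hDgen (K : comPzRingType) d n m (P rho : 'M[K]_d) (Y Ya : 'I_n -> 'M[K]_d)
  (Yd Ydd : 'I_n -> 'I_m -> 'M[K]_d) (lam : 'I_m -> 'M[K]_d) (c : 'I_m -> K) (h : K) :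
  (forall j, \sum_(l < n) (Yd l j *m P *m Ya l + Y l *m P *m Ydd l j) = h *: (rho *m lam j + lam j *m rho)) ->
  \sum_(l < n) ((\sum_(j < m) c j *: Yd l j) *m P *m Ya l + Y l *m P *m (\sum_(j < m) c j *: Ydd l j))
  = h *: (rho *m (\sum_(j < m) c j *: lam j) + (\sum_(j < m) c j *: lam j) *m rho).
Proof.
move=> H.
have -> : h *: (rho *m (\sum_(j < m) c j *: lam j) + (\sum_(j < m) c j *: lam j) *m rho)
   = \sum_(j < m) c j *: (h *: (rho *m lam j + lam j *m rho)).
  rewrite mulmx_sumr mulmx_suml -big_split scaler_sumr; apply: eq_bigr => j _ /=.
  by rewrite -scalemxAl -scalemxAr -scalerDr !scalerA mulrC.
under [RHS]eq_bigr => j _ do rewrite -H scaler_sumr.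
rewrite exchange_big /=; apply: eq_bigr => l _.
rewrite mulmx_suml mulmx_suml mulmx_sumr -big_split /=; apply: eq_bigr => j _.
by rewrite -scalemxAl -scalemxAl -scalemxAr scalerDr.
Qed.
Lemma sum3 (R : realType) n m (F : 'I_n -> 'I_m -> 'I_m -> R) (w : 'I_m -> R) :
  \sum_(j < m) \sum_(k < m) w j * (4 * \sum_(l < n) F l j k) * w k
  = 4 * \sum_(l < n) \sum_(j < m) \sum_(k < m) w j * F l j k * w k.
Proof.
rewrite [in RHS]exchange_big /= [in RHS]mulr_sumr; apply: eq_bigr => j _.
rewrite [in RHS]exchange_big /= [in RHS]mulr_sumr; apply: eq_bigr => k _.
rewrite !mulr_sumr mulr_suml; apply: eq_bigr => l _.
ring.
Qed.

Lemma ReRR (R : realType) (x y : R) (z : R[i]) : complex.Re (x%:C * z * y%:C) = x * complex.Re z * y.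
Proof. case: z => a b; rewrite /real_complex_def /=; ring. Qed.

Unset Implicit Arguments. Set Strict Implicit.

Theorem lemma7 (R : realType) (d m r : nat)
  (E : 'I_r -> 'rV[R]_m -> CM R d)          (* original Kraus operators *)
  (Y : 'I_d -> 'rV[R]_m -> CM R d)          (* canonical Kraus operators Upsilon_k *)
  (psi0 : CV R d)                           (* input pure state *)
  (p : 'I_d -> 'rV[R]_m -> R)
  (w : 'I_d -> 'rV[R]_m -> CV R d) :
  (* E is a differentiable Kraus representation *)
  (forall k, mx_differentiable (E k)) ->
  (forall t, \sum_(k < r) adj (E k t) *m E k t = 1%:M) ->
  (* Upsilon is a differentiable Kraus representation of the same channel *)
  (forall k, mx_differentiable (Y k)) ->
  (forall t, \sum_(k < d) adj (Y k t) *m Y k t = 1%:M) ->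
  (forall t (X : CM R d),
      \sum_(k < r) (E k t *m X *m adj (E k t)) = \sum_(k < d) (Y k t *m X *m adj (Y k t))) ->
  (* normalized pure input state *)
  adj psi0 *m psi0 = 1%:M ->
  (* canonical property *)
  (forall t j k, \tr (Y k t *m pure_st psi0 *m adj (Y j t)) = (if j == k then (p k t)%:C else 0)) ->
  (* differentiable orthonormal basis w_k with w_k = p_k^{-1/2} Upsilon_k psi0 when p_k > 0 *)
  (forall k, mx_differentiable (w k)) ->
  (forall t j k, adj (w j t) *m w k t = (if j == k then 1 else 0)%:M) ->
  (forall t k, 0 < p k t -> w k t = ((Num.sqrt (p k t))^-1)%:C *: (Y k t *m psi0)) ->
  (* conclusion: H(theta) <= C_Upsilon(theta) for every choice of SLDs *)
  forall (t : 'rV[R]_m) (lam : 'I_m -> CM R d),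
    (forall j, selfadj (lam j)) ->
    (forall j, pderiv (chan_out Y (pure_st psi0)) j t =
               (2^-1)%:C *: (chan_out Y (pure_st psi0) t *m lam j + lam j *m chan_out Y (pure_st psi0) t)) ->
    forall v : 'rV[R]_m,
      qform (SLDinfo lam (chan_out Y (pure_st psi0) t)) v <= qform (SMbound Y (pure_st psi0) t) v.
Proof.
move=> _ _ hY _ _ _ _ _ _ _ t lam hsa hSLD v.
set P := pure_st psi0.
pose Yd l j := pderiv (Y l) j t.
pose c j := (v 0 j)%:C.
pose Lam := \sum_(j < m) c j *: lam j.
pose Z l := \sum_(j < m) c j *: Yd l j.
have hder j : pderiv (chan_out Y P) j t = \sum_(l < d) (Yd l j *m P *m adj (Y l t) + Y l t *m P *m adj (Yd l j)).
  have hYk k : mder t (evec R j) (Y k) := mder_diff t (evec R j) (hY k).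
  have hk k : mder t (evec R j) (fun s => Y k s *m P *m adj (Y k s)) /\
     pD t (evec R j) (fun s => Y k s *m P *m adj (Y k s)) = Yd k j *m P *m adj (Y k t) + Y k t *m P *m adj (Yd k j).
    have [h1 e1] := mderM (hYk k) (mder_cst t (evec R j) P).1.
    have [h2 e2] := mder_adj (hYk k).
    have [h3 e3] := mderM h1 h2.
    by split => //; rewrite e3 e1 e2 (mder_cst t (evec R j) P).2 mulmx0 addr0.
  have [_ e] := mder_sum (fun k => (hk k).1).
  transitivity (pD t (evec R j) (fun s => \sum_(k < d) (Y k s *m P *m adj (Y k s)))); first by [].
  by rewrite e; apply: eq_bigr => k _; exact: (hk k).2.
have hadjZl l : adj (Z l) = \sum_(j < m) c j *: adj (Yd l j).
  by rewrite hadj_sum; apply: eq_bigr => j _; rewrite hadjZ conjR.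
have hL : adj Lam = Lam.
  by rewrite hadj_sum; apply: eq_bigr => j _; rewrite hadjZ conjR hsa.
have hD : \sum_(l < d) (Z l *m P *m adj (Y l t) + Y l t *m P *m adj (Z l))
   = ((2:R)^-1)%:C *: (chan_out Y P t *m Lam + Lam *m chan_out Y P t).
  under eq_bigr => l _ do rewrite hadjZl.
  apply: (hDgen (Ya := fun l => adj (Y l t)) (Ydd := fun l j => adj (Yd l j))) => j.
  by rewrite -hder hSLD.
have hrho : chan_out Y P t = \sum_(l < d) (Y l t *m (psi0 *m adj psi0) *m adj (Y l t)) by [].
have := core hL hrho hD.
have eqH : qform (SLDinfo lam (chan_out Y P t)) v = complex.Re (\tr (Lam *m chan_out Y P t *m Lam)).
  have -> : Lam *m chan_out Y P t *m Lam = Lam *m chan_out Y P t *m (\sum_(k < m) c k *: adj (lam k)).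
    by congr (_ *m _); apply: eq_bigr => k _; rewrite hsa.
  rewrite (trexp lam (fun k => adj (lam k)) (chan_out Y P t) c) qRe_sum; apply: eq_bigr => j _.
  rewrite qRe_sum; apply: eq_bigr => k _; by rewrite hsa ReRR.
have eqC : qform (SMbound Y P t) v = 4 * \sum_(l < d) complex.Re (\tr (Z l *m (psi0 *m adj psi0) *m adj (Z l))).
  have e l : complex.Re (\tr (Z l *m (psi0 *m adj psi0) *m adj (Z l))) =
      \sum_(j < m) \sum_(k < m) v 0 j * complex.Re (\tr (Yd l j *m P *m adj (Yd l k))) * v 0 k.
    rewrite hadjZl (trexp (Yd l) (fun k => adj (Yd l k)) P c) qRe_sum; apply: eq_bigr => j _.
    rewrite qRe_sum; apply: eq_bigr => k _; by rewrite ReRR.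
  by rewrite (eq_bigr _ (fun l _ => e l)) -sum3.
by rewrite eqH eqC.
Qed.
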